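(* Let $A$ be a $0$-$1$ matrix over a set $\mathcal G$. Under the isomorphism $\tilde R_A\cong C(\tilde\Gamma_A)$, $f\mapsto\hat f$, one has $\mathfrak R_A\cong C_0(\Gamma_A;\mathbb Z)$ and $\tilde{\mathfrak R}_A\cong C(\tilde\Gamma_A;\mathbb Z)$ (the integer-valued continuous functions, vanishing at infinity in the first case).
   Context: $\rho_i(j)=A(i,j)$ (rows of $A$) and $\delta_i=$ indicator of $\{i\}$, functions on $\mathcal G$. $R_A\subset\ell^\infty(\mathcal G)$ is the $C^*$-algebra generated by all $\rho_i,\delta_i$ and $\tilde R_A$ the one generated by these and $\mathbf 1$. $\mathfrak R_A\subset\mathbb Z^{\mathcal G}$ is the ring generated by $\{\delta_i,\rho_i:i\in\mathcal G\}$, and $\tilde{\mathfrak R}_A$ the ring generated by these and $\mathbf 1$. $\tilde{\mathcal G}=\mathcal G\cup\{\star\}$ is the one-point compactification of discrete $\mathcal G$; $c_j(i)=A(i,j)$; $\tilde\Gamma_A$ is the closure of $\{(j,c_j):j\in\mathcal G\}$ in $\tilde{\mathcal G}\times\{0,1\}^{\mathcal G}$ and $\Gamma_A=\tilde\Gamma_A\setminus\{(\star,\mathbf 0)\}$. It is known that, identifying $j$ with $(j,c_j)$, each $f\in\tilde R_A$ has a unique continuous extension $\hat f$ to $\tilde\Gamma_A$, and $f\mapsto\hat f$ is an isomorphism $\tilde R_A\cong C(\tilde\Gamma_A)$ carrying $R_A$ onto $C_0(\Gamma_A)$. *)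

(* Defs.v *)
From HB Require Import structures.
From mathcomp Require Import all_boot all_order all_algebra.
From mathcomp Require Import all_classical all_reals all_analysis.
Set Implicit Arguments. Unset Strict Implicit. Unset Printing Implicit Defensive.
Import Order.TTheory GRing.Theory Num.Theory.
Import numFieldNormedType.Exports.
Local Open Scope classical_set_scope.
Local Open Scope ring_scope.

Section Defs.
Variables (G : choiceType) (A : G -> G -> bool).

Definition rhoA (i : G) : G -> int := fun j => (A i j)%:Z.
Definition deltaA (i : G) : G -> int := fun j => (j == i)%:Z.

Inductive frakR : (G -> int) -> Prop :=
  | frakR_delta i : frakR (deltaA i)
  | frakR_rho i : frakR (rhoA i)
  | frakR_0 : frakR (fun _ => 0)
  | frakR_add f g : frakR f -> frakR g -> frakR (fun j => f j + g j)
  | frakR_opp f : frakR f -> frakR (fun j => - f j)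
  | frakR_mul f g : frakR f -> frakR g -> frakR (fun j => f j * g j).

Inductive frakRt : (G -> int) -> Prop :=
  | frakRt_delta i : frakRt (deltaA i)
  | frakRt_rho i : frakRt (rhoA i)
  | frakRt_1 : frakRt (fun _ => 1)
  | frakRt_0 : frakRt (fun _ => 0)
  | frakRt_add f g : frakRt f -> frakRt g -> frakRt (fun j => f j + g j)
  | frakRt_opp f : frakRt f -> frakRt (fun j => - f j)
  | frakRt_mul f g : frakRt f -> frakRt g -> frakRt (fun j => f j * g j).

(** tilde G : one-point compactification of discrete G (None = star). *)
Local Notation Gt := (one_point_compactification (discrete_topology G)).

Local Notation Amb := (Gt * {ptws G -> bool})%type.

Definition colA (j : G) : {ptws G -> bool} := fun i => A i j.

Definition embA (j : G) : Amb := (Some j : Gt, colA j).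

Definition GammatA : set Amb := closure (range embA).
Definition GammaA : set Amb :=
  GammatA `\` [set ((None : Gt), (fun _ => false) : {ptws G -> bool})].

End Defs.

Notation Gt G := (one_point_compactification (discrete_topology G)).
Notation Amb G := (Gt G * {ptws G -> bool})%type.

Definition CZ (R : realType) (G : choiceType) (X : set (Amb G)) (g : Amb G -> R) : Prop :=
  {within X, continuous g} /\ (forall x, X x -> g x \is a Num.int).

Definition C0Z (R : realType) (G : choiceType) (X : set (Amb G)) (g : Amb G -> R) : Prop :=
  CZ X g /\ (forall eps : R, 0 < eps -> compact [set x | X x /\ eps <= `|g x|]).

(* Main.v *)
Require Import Defs.
From HB Require Import structures.
From mathcomp Require Import all_boot all_order all_algebra.
From mathcomp Require Import all_classical all_reals all_analysis.
Import Order.TTheory GRing.Theory Num.Theory.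
Import numFieldNormedType.Exports.
Local Open Scope classical_set_scope.
Local Open Scope ring_scope.
From mathcomp Require Import zify.
Section Cyls.
Context {G : choiceType}.
Definition Cyl (c : {ptws G -> bool}) (S : seq G) : set {ptws G -> bool} :=
  [set d | forall i, i \in S -> d i = c i].
Definition CylF (c : {ptws G -> bool}) := filter_from [set: seq G] (Cyl c).
Instance CylF_filter c : Filter (CylF c).
Proof.
apply: filter_from_filter; first by exists [::].
move=> S1 S2 _ _; exists (S1 ++ S2) => // d Hd; split => i Hi; apply: Hd; rewrite mem_cat Hi ?orbT //.
Qed.
Lemma CylF_cvg c : CylF c --> c.
Proof.
apply/cvg_sup => i.
move=> A /=. change (@nbhs _ (initial_topology (fun f : {ptws G -> bool} => f i)) c A -> CylF c A). rewrite nbhsE; move=> [W [oW Wc] WA].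
case: oW => B oB BW.
exists [:: i] => // d Hd; apply: WA; rewrite -BW /=.
by rewrite Hd ?mem_head //; move: Wc; rewrite -BW.
Qed.
Lemma nbhs_cyl (c : {ptws G -> bool}) N : nbhs c N -> exists S, Cyl c S `<=` N.
Proof. move=> /CylF_cvg [S _ HS]; by exists S. Qed.
Lemma cyl_nbhs (c : {ptws G -> bool}) S : nbhs c (Cyl c S).
Proof.
elim: S => [|i S IH].
  rewrite (_ : Cyl c [::] = setT); first exact: filterT.
  by apply/seteqP; split => d // _ i.
have Hi : nbhs c [set d : {ptws G -> bool} | d i = c i].
  have := @proj_continuous G (fun _ => bool) i c [set c i].
  move=> H; apply: H.
  by rewrite /= nbhs_principalE; apply/principal_filterP.
apply: filterS (filterI Hi IH) => d [di dS] k; rewrite inE => /orP[/eqP->|]//.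
exact: dS.
Qed.
Lemma cyl_open (c : {ptws G -> bool}) S : open (Cyl c S).
Proof.
rewrite openE => d Hd; rewrite /interior.
rewrite (_ : Cyl c S = Cyl d S); first exact: cyl_nbhs.
by apply/seteqP; split => e He k kS; rewrite He // Hd.
Qed.
End Cyls.
Definition seqF {X : choiceType} : set_system (seq X) :=
  filter_from [set: seq X] (fun s0 => [set s | {subset s0 <= s}]).
Instance seqF_filter {X : choiceType} : Filter (@seqF X).
Proof.
apply: filter_from_filter; first by exists [::].
move=> s1 s2 _ _; exists (s1 ++ s2) => // s Hs; split => x Hx; apply: Hs;
  by rewrite mem_cat Hx ?orbT.
Qed.

Lemma compact_fin_cover {X : topologicalType} (K : set X) (B : X -> set X) :
  compact K -> (forall x, K x -> nbhs x (B x)) ->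
  exists s : seq X, (forall x, x \in s -> K x) /\
     K `<=` [set y | exists2 x, x \in s & B x y].
Proof.
move=> /compact_near_coveringP cK HB.
have := cK (seq X) seqF (fun s y => exists2 x, x \in s & K x /\ B x y) seqF_filter.
case.
  move=> x Kx; exists (B x, [set s | x \in s]); first split.
  - exact: HB.
  - exists [:: x] => // s; apply; exact: mem_head.
  by case=> y s [/= Bxy xs]; exists x.
move=> s0 _ Hs0; have {}Hs0 := Hs0 s0 (fun x => id).
exists [seq x <- s0 | `[< K x >]]; split.
  by move=> x; rewrite mem_filter => /andP[/asboolP].
move=> y /Hs0 [x xs [Kx Bxy]]; exists x => //.
by rewrite mem_filter xs andbT; apply/asboolP.
Qed.

Section Gts.
Context {G : choiceType}.
Local Notation Gt := (Gt G).
Lemma compact_discrete_fin (C : set (discrete_topology G)) : compact C ->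
  exists s : seq G, C `<=` [set` s].
Proof.
move=> cC; have [s [_ Hs]] := @compact_fin_cover _ C (fun x => [set x]) cC
  (fun x _ => discrete_set1 x).
by exists s => y /Hs [x xs ->].
Qed.

Lemma Gt_some_nbhs (k : G) : nbhs (Some k : Gt) [set Some k].
Proof.
change (nbhs (k : discrete_topology G) (Some @^-1` [set (Some k : Gt)])).
apply: (@filterS _ _ (nbhs_filter (k : discrete_topology G)) [set (k : discrete_topology G)]); last exact: discrete_set1.
by move=> y ->.
Qed.
Lemma Gt_none_nbhs (N : set Gt) : nbhs (None : Gt) N ->
  exists s : seq G, [set y : Gt | forall k, y = Some k -> k \notin s] `<=` N.
Proof.
rewrite /nbhs /= => -[C [cC _] CN].
have [s Hs] := @compact_discrete_fin C cC.
exists s => y Hy; apply: CN; case: y Hy => [k|] Hy; last by right.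
left; exists k => // Ck; have := Hy k erefl; by rewrite Hs.
Qed.
Lemma Gt_open_some (k : G) : open [set (Some k : Gt)].
Proof.
rewrite openE => y ->; exact: Gt_some_nbhs.
Qed.
Lemma Gt_open_cof (s : seq G) : open [set y : Gt | forall k, y = Some k -> k \notin s].
Proof.
rewrite openE => -[k|] Hy; rewrite /interior /nbhs /=.
  change (nbhs (k : discrete_topology G) (Some @^-1` [set y : Gt | forall k, y = Some k -> k \notin s])).
  apply: (@filterS _ _ (nbhs_filter (k : discrete_topology G)) [set (k : discrete_topology G)]); last exact: discrete_set1.
  by move=> y -> k' [<-]; exact: Hy.
exists [set` s]; first split.
- by apply: finite_compact; apply/finite_seqP; exists s.
- exact: discrete_closed.
move=> y [[k' /= ks <-] k'' [<-]|->//]; by apply/negP.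
Qed.
End Gts.
Section Ambs.
Context {G : choiceType}.
Lemma amb_nbhs (x : Amb G) N : nbhs x N ->
  exists N1 N2, nbhs x.1 N1 /\ nbhs x.2 N2 /\ N1 `*` N2 `<=` N.
Proof.
case=> -[N1 N2] /= [H1 H2] HN; by exists N1, N2.
Qed.
Lemma amb_openX (U : set (Gt G)) (V : set {ptws G -> bool}) : open U -> open V -> open (U `*` V).
Proof.
move=> oU oV; rewrite openE => -[a b] [/= Ua Vb].
exists (U, V) => //=; split; [exact: open_nbhs_nbhs | exact: open_nbhs_nbhs].
Qed.
Lemma ptws_compact : compact [set: {ptws G -> bool}].
Proof.
have := @tychonoff G (fun _ => bool) (fun _ => setT) (fun _ => bool_compact).
by rewrite (_ : [set f | forall i, _] = setT) //; apply/seteqP; split.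
Qed.
Lemma amb_compact : compact [set: Amb G].
Proof.
rewrite -setXTT; apply: compact_setX; [exact: one_point_compactification_compact | exact: ptws_compact].
Qed.
End Ambs.

Lemma nbhsS {T : topologicalType} (x : T) (P Q : set T) :
  P `<=` Q -> nbhs x P -> nbhs x Q.
Proof. exact: (@filterS _ _ (nbhs_filter x)). Qed.

Definition zeroA {G : choiceType} : Amb G := ((None : Gt G), (fun _ => false) : {ptws G -> bool}).

Section PartA.
Variables (R : realType) (G : choiceType) (A : G -> G -> bool).

Definition lc (g : Amb G -> R) := forall x, nbhs x [set y | g y = g x].

Lemma lc_cont g : lc g -> continuous g.
Proof.
move=> H x U /= nU; apply: filterS (H x) => y /= ->; exact: nbhs_singleton.
Qed.

Lemma lc_closed g (P : R -> Prop) : lc g -> closed [set x | P (g x)].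
Proof.
move=> H x Hx; have [y [/= Py gy]] := Hx _ (H x); by rewrite -gy.
Qed.

Lemma lc_fst (h : Gt G -> R) : (forall a, nbhs a [set b | h b = h a]) ->
  lc (fun x => h x.1).
Proof.
move=> H [a c]; exists ([set b | h b = h a], setT) => //=; first split => //.
  exact: filterT.
by move=> [b d] [/= ->].
Qed.

Lemma lcD g1 g2 : lc g1 -> lc g2 -> lc (fun x => g1 x + g2 x).
Proof. move=> H1 H2 x; by apply: filterS (filterI (H1 x) (H2 x)) => y /= [-> ->]. Qed.
Lemma lcN g1 : lc g1 -> lc (fun x => - g1 x).
Proof. move=> H1 x; by apply: filterS (H1 x) => y /= ->. Qed.
Lemma lcM g1 g2 : lc g1 -> lc g2 -> lc (fun x => g1 x * g2 x).
Proof. move=> H1 H2 x; by apply: filterS (filterI (H1 x) (H2 x)) => y /= [-> ->]. Qed.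
Lemma lcC (r : R) : lc (fun _ => r).
Proof. move=> x; exact: filterS (filterT) . Qed.

Lemma lc_delta (k : G) : lc (fun x : Amb G => ((x.1 == Some k) : bool)%:R).
Proof.
apply: (@lc_fst (fun b : Gt G => ((b == Some k) : bool)%:R)) => -[k'|].
  apply: nbhsS (Gt_some_nbhs k') => b /= -> //.
apply: (@nbhsS _ _ [set y : Gt G | forall k0, y = Some k0 -> k0 \notin [:: k]]).
  move=> [b|] //= Hb; have := Hb b erefl; rewrite inE => nb.
  by case: eqP => // -[bk]; move: nb; rewrite bk eqxx.
apply: open_nbhs_nbhs; split; first exact: Gt_open_cof.
by [].
Qed.

Lemma lc_rho (i : G) : lc (fun x : Amb G => (x.2 i : bool)%:R).
Proof.
move=> [a c]; exists (setT, Cyl c [:: i]) => //=; first split.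
- exact: filterT.
- exact: cyl_nbhs.
by move=> [b d] [/= _ H]; rewrite H // mem_head.
Qed.


Lemma fwdRt f : frakRt A f -> exists g : Amb G -> R,
  lc g /\ (forall x, g x \is a Num.int) /\ (forall j, g (embA A j) = (f j)%:~R).
Proof.
elim=> [k|i| | |f1 f2 _ [g1 [l1 [i1 e1]]] _ [g2 [l2 [i2 e2]]]
  |f1 _ [g1 [l1 [i1 e1]]]|f1 f2 _ [g1 [l1 [i1 e1]]] _ [g2 [l2 [i2 e2]]]].
- exists (fun x : Amb G => ((x.1 == Some k) : bool)%:R); split; first exact: lc_delta.
  split=> [x|j]; first exact: natr_int.
  rewrite /deltaA /embA /=; case: (eqVneq j k) => [->|ne]; first by rewrite eqxx.
  case: eqP => // -[] jk; by move/eqP: ne.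
- exists (fun x : Amb G => (x.2 i : bool)%:R); split; first exact: lc_rho.
  split=> [x|j]; first exact: natr_int.
  by rewrite /rhoA /embA /colA /=; case: (A i j).
- exists (fun _ => 1); split; first exact: lcC.
  by split=> [x|j] //; exact: (natr_int _ 1).
- exists (fun _ => 0); split; first exact: lcC.
  by split=> [x|j] //; exact: (natr_int _ 0).
- exists (fun x => g1 x + g2 x); split; first exact: lcD.
  split=> [x|j]; first by rewrite rpredD.
  by rewrite intrD e1 e2.
- exists (fun x => - g1 x); split; first exact: lcN.
  split=> [x|j]; first by rewrite rpredN.
  by rewrite intrN e1.
- exists (fun x => g1 x * g2 x); split; first exact: lcM.
  split=> [x|j]; first by rewrite rpredM.
  by rewrite intrM e1 e2.
Qed.

Lemma fwdR f : frakR A f -> exists g : Amb G -> R,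
  lc g /\ (forall x, g x \is a Num.int) /\ g (@zeroA G) = 0 /\
  (forall j, g (embA A j) = (f j)%:~R).
Proof.
elim=> [k|i| |f1 f2 _ [g1 [l1 [i1 [z1 e1]]]] _ [g2 [l2 [i2 [z2 e2]]]]
  |f1 _ [g1 [l1 [i1 [z1 e1]]]]|f1 f2 _ [g1 [l1 [i1 [z1 e1]]]] _ [g2 [l2 [i2 [z2 e2]]]]].
- exists (fun x : Amb G => ((x.1 == Some k) : bool)%:R); split; first exact: lc_delta.
  split=> [x|]; first exact: natr_int.
  split=> [|j]; first by [].
  rewrite /deltaA /embA /=; case: (eqVneq j k) => [->|ne]; first by rewrite eqxx.
  case: eqP => // -[] jk; by move/eqP: ne.
- exists (fun x : Amb G => (x.2 i : bool)%:R); split; first exact: lc_rho.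
  split=> [x|]; first exact: natr_int.
  split=> [|j]; first by [].
  by rewrite /rhoA /embA /colA /=; case: (A i j).
- exists (fun _ => 0); split; first exact: lcC.
  by split=> [x|] //; exact: (natr_int _ 0).
- exists (fun x => g1 x + g2 x); split; first exact: lcD.
  split=> [x|]; first by rewrite rpredD.
  split=> [|j]; first by rewrite z1 z2 addr0.
  by rewrite intrD e1 e2.
- exists (fun x => - g1 x); split; first exact: lcN.
  split=> [x|]; first by rewrite rpredN.
  split=> [|j]; first by rewrite z1 oppr0.
  by rewrite intrN e1.
- exists (fun x => g1 x * g2 x); split; first exact: lcM.
  split=> [x|]; first by rewrite rpredM.
  split=> [|j]; first by rewrite z1 mul0r.
  by rewrite intrM e1 e2.
Qed.

Lemma GammatA_compact : compact (GammatA A).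
Proof.
apply: (subclosed_compact _ (@amb_compact G)) => //; exact: closed_closure.
Qed.

Lemma lc_CZ g : lc g -> (forall x, g x \is a Num.int) -> forall X, CZ X g.
Proof.
move=> l i X; split; last by move=> x _; exact: i.
exact/continuous_subspaceT/lc_cont.
Qed.

Lemma lc_C0Z g : lc g -> (forall x, g x \is a Num.int) -> g (@zeroA G) = 0 ->
  C0Z (GammaA A) g.
Proof.
move=> l i z; split; first exact: lc_CZ.
move=> eps eps0.
rewrite (_ : [set x | _] = GammatA A `&` [set x | eps <= `|g x|]).
  apply: compact_closedI; first exact: GammatA_compact.
  exact: (@lc_closed g (fun r => eps <= `|r|) l).
apply/seteqP; split=> x /=; first by move=> [[? _] ?].
move=> [Gx ex]; split=> //; split=> // /= xz.
have : g x = 0 by rewrite xz.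
move=> g0; move: ex; rewrite g0 normr0 => ex.
by move: (lt_le_trans eps0 ex); rewrite ltxx.
Qed.

End PartA.

Set Implicit Arguments. Unset Strict Implicit.
Section Alg.
Variables (G : choiceType) (A : G -> G -> bool).

Definition Ind (B : set (Amb G)) (h : G -> int) :=
  forall j, (B (embA A j) -> h j = 1) /\ (~ B (embA A j) -> h j = 0).

Lemma Ind_ext B B' h h' : (forall y, B y <-> B' y) -> (forall j, h j = h' j) ->
  Ind B h -> Ind B' h'.
Proof.
move=> EB Eh H j; rewrite -Eh; have [H1 H2] := H j; split.
  by move/EB; exact: H1.
by move=> nB; apply: H2 => /EB.
Qed.

Lemma Ind_rho i : Ind [set y | y.2 i = true] (rhoA A i).
Proof. by move=> j; rewrite /rhoA /embA /colA /=; case: (A i j). Qed.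

Lemma Ind_delta k : Ind [set y | y.1 = Some k] (deltaA k).
Proof.
move=> j; rewrite /deltaA /embA /=; case: (eqVneq j k) => [->|ne]; split => //.
by case=> jk; move/eqP: ne.
Qed.

Lemma Ind_T : Ind setT (fun _ => 1).
Proof. by move=> j; split => // H; exfalso; apply: H. Qed.

Lemma Ind_C B h : Ind B h -> Ind (~` B) (fun j => 1 - h j).
Proof.
move=> H j; have [H1 H2] := H j; split.
  by move=> nB; rewrite H2 // subr0.
by move=> /contrapT Bj; rewrite H1 // subrr.
Qed.

Lemma Ind_I B1 B2 h1 h2 : Ind B1 h1 -> Ind B2 h2 ->
  Ind (B1 `&` B2) (fun j => h1 j * h2 j).
Proof.
move=> H1 H2 j; have [a1 b1] := H1 j; have [a2 b2] := H2 j; split.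
  by move=> [x1 x2]; rewrite a1 // a2.
move=> n; have [x1|x1] := pselect (B1 (embA A j)); last by rewrite b1 // mul0r.
have [x2|x2] := pselect (B2 (embA A j)); last by rewrite b2 // mulr0.
by exfalso; apply: n.
Qed.

Fixpoint cylI (c : G -> bool) (S : seq G) : G -> int :=
  match S with
  | [::] => fun _ => 1
  | i :: S' => fun j => (if c i then rhoA A i j else 1 - rhoA A i j) * cylI c S' j
  end.

Lemma Ind_cyl (c : {ptws G -> bool}) S : Ind [set y | Cyl c S y.2] (cylI c S).
Proof.
elim: S => [|i S IH] /=.
  by apply: (Ind_ext _ _ Ind_T) => // y; split => // _ i.
have Hi : Ind [set y | y.2 i = c i] (fun j => if c i then rhoA A i j else 1 - rhoA A i j).
  case: (c i); first exact: Ind_rho.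
  apply: (Ind_ext _ _ (Ind_C (Ind_rho i))) => // y /=.
  by case: (y.2 i); split.
apply: (Ind_ext _ _ (Ind_I Hi IH)) => // y /=; split.
  move=> [yi yS] k; rewrite inE => /orP[/eqP->|]//; exact: yS.
move=> H; split; first by apply: H; rewrite mem_head.
by move=> k kS; apply: H; rewrite inE kS orbT.
Qed.

Fixpoint cofI (s : seq G) : G -> int :=
  match s with
  | [::] => fun _ => 1
  | k :: s' => fun j => (1 - deltaA k j) * cofI s' j
  end.

Lemma Ind_cof s : Ind [set y | forall k, y.1 = Some k -> k \notin s] (cofI s).
Proof.
elim: s => [|k s IH] /=.
  by apply: (Ind_ext _ _ Ind_T) => // y; split => // _ k.
apply: (Ind_ext _ _ (Ind_I (Ind_C (Ind_delta k)) IH)) => // y /=; split.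
  move=> [yk ys] k' yk'; rewrite inE negb_or (ys _ yk') andbT.
  by apply/eqP => kk; apply: yk; rewrite yk' kk.
move=> H; split.
  by move=> yk; have := H _ yk; rewrite mem_head.
by move=> k' yk'; have := H _ yk'; rewrite inE negb_or => /andP[].
Qed.

Lemma frakR_ext f f' : (forall j, f j = f' j) -> frakR A f -> frakR A f'.
Proof. by move=> E; rewrite (_ : f' = f) //; apply: funext => j; rewrite E. Qed.
Lemma frakRt_ext f f' : (forall j, f j = f' j) -> frakRt A f -> frakRt A f'.
Proof. by move=> E; rewrite (_ : f' = f) //; apply: funext => j; rewrite E. Qed.

Lemma frakR_t f : frakR A f -> frakRt A f.
Proof. elim; by constructor. Qed.

Lemma frakR_idealr h : frakRt A h -> forall f, frakR A f -> frakR A (fun j => f j * h j).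
Proof.
elim=> [k|i| | |h1 h2 _ IH1 _ IH2|h1 _ IH1|h1 h2 _ IH1 _ IH2] f Hf.
- by apply: frakR_mul Hf _; constructor.
- by apply: frakR_mul Hf _; constructor.
- by apply: (frakR_ext _ Hf) => j; rewrite mulr1.
- by apply: (frakR_ext _ (frakR_0 A)) => j; rewrite mulr0.
- by apply: (frakR_ext _ (frakR_add (IH1 _ Hf) (IH2 _ Hf))) => j; rewrite mulrDr.
- by apply: (frakR_ext _ (frakR_opp (IH1 _ Hf))) => j; rewrite mulrN.
- by apply: (frakR_ext _ (IH2 _ (IH1 _ Hf))) => j; rewrite mulrA.
Qed.

Lemma frakR_ideall h f : frakRt A h -> frakR A f -> frakR A (fun j => h j * f j).
Proof.
move=> Hh Hf; apply: (frakR_ext _ (frakR_idealr Hh Hf)) => j; exact: mulrC.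
Qed.

Lemma cylI_t c S : frakRt A (cylI c S).
Proof.
elim: S => [|i S IH] /=; first exact: frakRt_1 A.
apply: frakRt_mul IH; case: (c i); first exact: frakRt_rho A i.
exact: frakRt_add (frakRt_1 A) (frakRt_opp (frakRt_rho A _)).
Qed.

Lemma cylI_R c S i0 : i0 \in S -> c i0 = true -> frakR A (cylI c S).
Proof.
elim: S => [|i S IH] //=; rewrite inE => /orP[/eqP<-|iS] ci0.
  rewrite ci0; apply: frakR_idealr; [exact: cylI_t | by constructor].
apply: frakR_ideall; last exact: IH.
case: (c i); first exact: frakRt_rho A i.
exact: frakRt_add (frakRt_1 A) (frakRt_opp (frakRt_rho A _)).
Qed.

Lemma cofI_t s : frakRt A (cofI s).
Proof.
elim: s => [|k s IH] /=; first exact: frakRt_1 A.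
exact: frakRt_mul (frakRt_add (frakRt_1 A) (frakRt_opp (frakRt_delta A _))) IH.
Qed.

End Alg.


Section Good.
Variables (G : choiceType) (A : G -> G -> bool).

Lemma good_nbhd (x : Amb G) N : nbhs x N -> exists B h,
  [/\ open B, B x, B `<=` N, Ind A B h & frakRt A h] /\ (x <> zeroA -> frakR A h).
Proof.
move=> /amb_nbhs [N1 [N2 [H1 [H2 HN]]]].
have [S HS] := nbhs_cyl _ _ H2.
case: x H1 H2 HS => a c /= H1 H2 HS.
case: a H1 => [k|] H1.
  exists ([set Some k] `*` Cyl c S), (fun j => deltaA k j * cylI A c S j); split; [split|].
  - apply: amb_openX; [exact: Gt_open_some | exact: cyl_open].
  - by split => //= i.
  - move=> [b d] [/= -> dS]; apply: (HN (Some k, d)); split => /=.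
      exact: nbhs_singleton H1.
    exact: HS.
  - apply: (Ind_ext _ _ (Ind_I (Ind_delta A k) (Ind_cyl A c S))) => // y; by split.
  - exact: frakRt_mul (frakRt_delta A k) (cylI_t A c S).
  - move=> _; exact: (frakR_idealr (cylI_t A c S) (frakR_delta A k)).
have [s Hs] := Gt_none_nbhs _ H1.
have key : forall S' : seq G, {subset S <= S'} -> exists B h,
  [/\ open B, B ((None : Gt G), c), B `<=` N, Ind A B h & frakRt A h] /\
  (forall i0, i0 \in S' -> c i0 = true -> frakR A h).
  move=> S' SS'.
  exists ([set y : Gt G | forall k, y = Some k -> k \notin s] `*` Cyl c S'),
    (fun j => cylI A c S' j * cofI s j); split; [split|].
  - apply: amb_openX; [exact: Gt_open_cof | exact: cyl_open].
  - by split => //= i.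
  - move=> [b d] [/= bs dS]; apply: (HN (b, d)); split => /=.
      exact: Hs.
    by apply: HS => i iS; apply: dS; exact: SS'.
  - apply: (Ind_ext _ _ (Ind_I (Ind_cyl A c S') (Ind_cof A s))) => // y.
    by split => -[].
  - exact: frakRt_mul (cylI_t A c S') (cofI_t A s).
  - move=> i0 i0S ci0; exact: (frakR_idealr (cofI_t A s) (cylI_R A i0S ci0)).
have [[i0 ci0]|nc] := pselect (exists i0, c i0 = true).
  have sub : {subset S <= i0 :: S} by move=> i iS; rewrite inE iS orbT.
  have [B [h [[? ? ? ? ?] HR]]] := key (i0 :: S) sub.
  exists B, h; split => // _; exact: HR i0 (mem_head _ _) ci0.
have [B [h [[? ? ? ? ?] HR]]] := key S (fun i iS => iS).
exists B, h; split => // nz; exfalso; apply: nz.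
rewrite /zeroA; congr (_, _); apply: funext => i; apply/negbTE/negP => ci.
by apply: nc; exists i.
Qed.
End Good.


Fixpoint Fs {T G : Type} (v : T -> int) (hh : T -> G -> int) (s : seq T) : G -> int :=
  match s with
  | [::] => fun _ => 0
  | x :: s' => fun j => v x * hh x j + (Fs v hh s' j - hh x j * Fs v hh s' j)
  end.

Section Assemble.
Variables (R : realType) (G : choiceType) (A : G -> G -> bool)
  (P : (G -> int) -> Prop).
Hypotheses (P0 : P (fun _ => 0))
  (PD : forall f g, P f -> P g -> P (fun j => f j + g j))
  (PN : forall f, P f -> P (fun j => - f j))
  (PM : forall f g, P f -> P g -> P (fun j => f j * g j)).

Lemma P_ext f f' : (forall j, f j = f' j) -> P f -> P f'.
Proof. by move=> E; rewrite (_ : f' = f) //; apply: funext => j; rewrite E. Qed.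

Lemma P_scale (z : int) f : P f -> P (fun j => z * f j).
Proof.
move=> Pf.
have Hn : forall n : nat, P (fun j => n%:Z * f j).
  elim=> [|n IH]; first by apply: (P_ext _ P0) => j; rewrite mul0r.
  apply: (P_ext _ (PD Pf IH)) => j.
  by rewrite -[in RHS](addn1 n) PoszD mulrDl mul1r addrC.
case: z => n; first exact: Hn.
apply: (P_ext _ (PN (Hn n.+1))) => j; by rewrite NegzE mulNr.
Qed.

Variables (X K : set (Amb G)) (g : Amb G -> R).
Hypotheses (cK : compact K) (KX : K `<=` X) (Xemb : forall j, X (embA A j))
  (gint : forall y, X y -> g y \is a Num.int)
  (good : forall x, K x -> exists B h,
     [/\ open B, B x, (forall y, B y -> X y -> g y = g x), Ind A B h & P h])
  (out : forall j, ~ K (embA A j) -> g (embA A j) = 0).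

Lemma assemble : exists f, P f /\ forall j, g (embA A j) = (f j)%:~R.
Proof.
have : forall x, exists p : set (Amb G) * (G -> int), K x ->
    [/\ open p.1, p.1 x, (forall y, p.1 y -> X y -> g y = g x), Ind A p.1 p.2 & P p.2].
  move=> x; have [Kx|nKx] := pselect (K x).
    by have [B [h H]] := good Kx; exists (B, h).
  by exists (set0, fun _ => 0).
move=> /choice [pp Hpp].
have nb : forall x, K x -> nbhs x (pp x).1.
  move=> x Kx; have [H1 H2 _ _ _] := Hpp x Kx; exact: open_nbhs_nbhs.
have [s [sK cov]] := @compact_fin_cover _ K (fun x => (pp x).1) cK nb.
pose v x := Num.floor (g x).
pose hh x := (pp x).2.
have inv : forall s : seq (Amb G), (forall x, x \in s -> K x) ->
   P (Fs v hh s) /\ forall j,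
   ((exists2 x, x \in s & (pp x).1 (embA A j)) -> (Fs v hh s j)%:~R = g (embA A j)) /\
   ((forall x, x \in s -> ~ (pp x).1 (embA A j)) -> Fs v hh s j = 0).
  elim=> [|x s' IH] Hs /=.
    split=> // j; split=> // -[x]; by rewrite in_nil.
  have Kx : K x by apply: Hs; exact: mem_head.
  have [IHP IHj] : _ := IH (fun y ys => Hs y (@mem_behead _ (x :: s') y ys)).
  have [_ _ Bg Ix Px] := Hpp x Kx.
  split.
    apply: PD; first exact: P_scale.
    apply: PD => //; apply: PN; exact: PM.
  move=> j; have [I1 I2] := Ix j; have [IH1 IH2] := IHj j.
  have [Bj|nBj] := pselect ((pp x).1 (embA A j)).
    rewrite /hh (I1 Bj) mulr1 mul1r subrr addr0; split; last first.
      by move=> H; exfalso; apply: (H x) => //; exact: mem_head.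
    move=> _; rewrite (Bg _ Bj (Xemb j)).
    by have := gint (KX Kx); rewrite intrEfloor => /eqP.
  rewrite /hh (I2 nBj) mulr0 mul0r subr0 add0r; split.
    move=> [y]; rewrite inE => /orP[/eqP->|ys] By; first by [].
    by apply: IH1; exists y.
  move=> H; apply: IH2 => y ys; apply: H; by rewrite inE ys orbT.
have [Ps Hj] := inv s sK.
exists (Fs v hh s); split => // j; have [H1 H2] := Hj j.
have [[x xs Bx]|nx] := pselect (exists2 x, x \in s & (pp x).1 (embA A j)).
  by rewrite H1 //; exists x.
rewrite H2; last by move=> x xs Bx; apply: nx; exists x.
apply: out => Kj; have [x xs Bx] := cov _ Kj; apply: nx; by exists x.
Qed.

End Assemble.


Lemma within_lc (R : realType) (G : choiceType) (X : set (Amb G)) (g : Amb G -> R) :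
  {within X, continuous g} -> (forall y, X y -> g y \is a Num.int) ->
  forall x, X x -> nbhs x [set y | X y -> g y = g x].
Proof.
move=> cg gi x Xx.
have := (subspace_continuousP X g).1 cg x Xx.
move=> /(_ _ (@nbhsx_ballx R R (g x) 1 ltr01)) /= H.
apply: nbhsS H => y /= H Xy; have := H Xy.
rewrite /ball /=.
have := gi _ Xx; have := gi _ Xy; rewrite !intrEfloor => /eqP <- /eqP <-.
move=> Hl.
have Hz : (`|Num.floor (g x) - Num.floor (g y)| < 1)%R.
  by rewrite -(@ltr_int R) intr_norm intrB.
suff -> : Num.floor (g y) = Num.floor (g x) by [].
lia.
Qed.


Unset Implicit Arguments. Set Strict Implicit.


Theorem proposition4p2 (R : realType) (G : choiceType) (A : G -> G -> bool) :
  ((forall f : G -> int, frakR A f ->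
      exists g : Amb G -> R, C0Z (GammaA A) g /\ forall j, g (embA A j) = (f j)%:~R)
   /\ (forall g : Amb G -> R, C0Z (GammaA A) g ->
      exists f : G -> int, frakR A f /\ forall j, g (embA A j) = (f j)%:~R))
  /\
  ((forall f : G -> int, frakRt A f ->
      exists g : Amb G -> R, CZ (GammatA A) g /\ forall j, g (embA A j) = (f j)%:~R)
   /\ (forall g : Amb G -> R, CZ (GammatA A) g ->
      exists f : G -> int, frakRt A f /\ forall j, g (embA A j) = (f j)%:~R)).
Proof.
have embT : forall j, GammatA A (embA A j).
  move=> j; apply: subset_closure; by exists j.
have embG : forall j, GammaA A (embA A j).
  by move=> j; split => //; rewrite /embA => -[].
split; split.
- move=> f /(fwdR R) [g [l [i [z e]]]]; exists g; split => //.
  exact: lc_C0Z.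
- move=> g [[cg gi] cpt].
  pose K := [set x | GammaA A x /\ 1 <= `|g x|].
  apply: (@assemble R G A (frakR A) (frakR_0 A) (fun f g => @frakR_add G A f g)
    (fun f => @frakR_opp G A f) (fun f g => @frakR_mul G A f g) (GammaA A) K g).
  + exact: cpt.
  + by move=> x [].
  + exact: embG.
  + exact: gi.
  + move=> x [Xx _].
    have [B [h [[oB Bx BN IB _] HR]]] := good_nbhd A (within_lc cg gi Xx).
    exists B, h; split.
    * exact: oB.
    * exact: Bx.
    * by move=> y By Xy; exact: (BN y By Xy).
    * exact: IB.
    * apply: HR => xz; case: Xx => _ H; apply: H; rewrite xz; reflexivity.
  + move=> j nK; have Xj := embG j.
    have : `|g (embA A j)| < 1.
      by rewrite ltNge; apply/negP => H; apply: nK.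
    have := gi _ Xj; rewrite intrEfloor => /eqP <-.
    move=> Hl.
    have Hz : (`|Num.floor (g (embA A j))| < 1)%R.
      by rewrite -(@ltr_int R) intr_norm.
    suff -> : Num.floor (g (embA A j)) = 0 by [].
    lia.
- move=> f /(fwdRt R) [g [l [i e]]]; exists g; split => //.
  exact: lc_CZ.
- move=> g [cg gi].
  apply: (@assemble R G A (frakRt A) (frakRt_0 A) (fun f g => @frakRt_add G A f g)
    (fun f => @frakRt_opp G A f) (fun f g => @frakRt_mul G A f g) (GammatA A) (GammatA A) g).
  + exact: GammatA_compact.
  + by [].
  + exact: embT.
  + exact: gi.
  + move=> x Xx.
    have [B [h [[oB Bx BN IB Ph] _]]] := good_nbhd A (within_lc cg gi Xx).
    exists B, h; split.
    * exact: oB.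
    * exact: Bx.
    * by move=> y By Xy; exact: (BN y By Xy).
    * exact: IB.
    * exact: Ph.
  + by move=> j nK; exfalso; apply: nK.
Qed.
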